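(* Let $\phi:\mathbb{M}_n\to\mathbb{M}_m$ be a positive linear map, and let $\phi^*:\mathbb{M}_m\to\mathbb{M}_n$ be its adjoint with respect to the Hilbert–Schmidt inner product $\langle A,B\rangle=\mathrm{Tr}[A^*B]$. Then \[ \mathrm{Tr}[K^*X^{+}K] \geq \mathrm{Tr}[\phi^*(K)^*\phi^*(X)^{+}\phi^*(K)] \] holds for all $(K,X)\in\mathbb{M}_m\times\mathbb{M}_m^+$ with $\ker(X)\subseteq\ker(K^* )$ if and only if $\phi$ satisfies the Schwarz inequality $\phi(K^*K)\geq\phi(K)^*\phi(K)$ for all $K\in\mathbb{M}_n$.
   Context: $\mathbb{M}_n$ denotes the $n\times n$ complex matrices and $\mathbb{M}_n^+$ the positive semidefinite ones. For a matrix $Z$, $Z^+$ denotes its Moore–Penrose generalized inverse. A linear map is positive if it maps positive semidefinite matrices to positive semidefinite matrices. No unitality of $\phi$ is assumed. *)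

(* Defs.v *)
(* complex matrices are 'M[algC]_n (algebraic complex numbers). *)
From HB Require Import structures.
From mathcomp Require Import all_boot all_order all_algebra all_field.
From Stdlib Require Import ClassicalEpsilon.
Set Implicit Arguments. Unset Strict Implicit. Unset Printing Implicit Defensive.
Import Order.TTheory GRing.Theory Num.Theory.
Local Open Scope ring_scope.

Definition mxadj (p q : nat) (A : 'M[algC]_(p, q)) : 'M[algC]_(q, p) :=
  (map_mx (fun x : algC => x^*) A)^T.

(* positive semidefinite: x^* A x >= 0 for every vector x (over C this forces A hermitian) *)
Definition psd (n : nat) (A : 'M[algC]_n) : Prop :=
  forall v : 'cV[algC]_n, 0 <= (mxadj v *m A *m v) 0 0.

Definition loewner_ge (n : nat) (A B : 'M[algC]_n) : Prop := psd (A - B).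

Definition is_MP (n : nat) (A Y : 'M[algC]_n) : Prop :=
  [/\ A *m Y *m A = A, Y *m A *m Y = Y,
      mxadj (A *m Y) = A *m Y & mxadj (Y *m A) = Y *m A].

Definition mpinv (n : nat) (A : 'M[algC]_n) : 'M[algC]_n :=
  epsilon (inhabits 0) (fun Y => is_MP A Y).

Definition positive_map (n m : nat) (phi : 'M[algC]_n -> 'M[algC]_m) : Prop :=
  forall A, psd A -> psd (phi A).

Definition hs_adjoint (n m : nat) (phi : 'M[algC]_n -> 'M[algC]_m)
  (psi : 'M[algC]_m -> 'M[algC]_n) : Prop :=
  forall (A : 'M[algC]_m) (B : 'M[algC]_n),
    \tr (mxadj A *m phi B) = \tr (mxadj (psi A) *m B).

Definition ker_sub (n : nat) (X Y : 'M[algC]_n) : Prop :=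
  forall v : 'cV[algC]_n, X *m v = 0 -> Y *m v = 0.

(* Main.v *)
Require Import Defs.
From HB Require Import structures.
From mathcomp Require Import all_boot all_order all_algebra all_field.
From mathcomp Require Import ring lra.
From Stdlib Require Import ClassicalEpsilon.
Import Order.TTheory GRing.Theory Num.Theory.
Local Open Scope ring_scope.

Module Helpers.
Import Num.Def.
Set Implicit Arguments. Unset Strict Implicit. Unset Printing Implicit Defensive.

Section Adj.
Implicit Types (p q r : nat).

Lemma adjE p q (A : 'M[algC]_(p,q)) i j : mxadj A i j = (A j i)^*.
Proof. by rewrite /mxadj !mxE. Qed.

Lemma adjK p q (A : 'M[algC]_(p,q)) : mxadj (mxadj A) = A.
Proof. by apply/matrixP=> i j; rewrite !adjE conjCK. Qed.

Lemma adjM p q r (A : 'M[algC]_(p,q)) (B : 'M[algC]_(q,r)) :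
  mxadj (A *m B) = mxadj B *m mxadj A.
Proof. by rewrite /mxadj map_mxM trmx_mul. Qed.

Lemma adjD p q (A B : 'M[algC]_(p,q)) : mxadj (A + B) = mxadj A + mxadj B.
Proof. by rewrite /mxadj map_mxD linearD. Qed.

Lemma adjN p q (A : 'M[algC]_(p,q)) : mxadj (- A) = - mxadj A.
Proof. by rewrite /mxadj map_mxN linearN. Qed.

Lemma adjB p q (A B : 'M[algC]_(p,q)) : mxadj (A - B) = mxadj A - mxadj B.
Proof. by rewrite adjD adjN. Qed.

Lemma adjZ p q c (A : 'M[algC]_(p,q)) : mxadj (c *: A) = c^* *: mxadj A.
Proof. by rewrite /mxadj map_mxZ linearZ. Qed.

Lemma adj0 p q : mxadj (0 : 'M[algC]_(p,q)) = 0.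
Proof. by apply/matrixP=> i j; rewrite adjE !mxE conjC0. Qed.

Lemma adj1 p : mxadj (1%:M : 'M[algC]_p) = 1%:M.
Proof. by rewrite /mxadj map_mx1 trmx1. Qed.

Lemma adj_sum p q I (r : seq I) (P : pred I) (F : I -> 'M[algC]_(p,q)) :
  mxadj (\sum_(i <- r | P i) F i) = \sum_(i <- r | P i) mxadj (F i).
Proof.
by apply: (big_morph _ (@adjD p q) (adj0 p q)).
Qed.

Lemma tr_adj p (A : 'M[algC]_p) : \tr (mxadj A) = (\tr A)^*.
Proof.
rewrite /mxtrace rmorph_sum; apply: eq_bigr => i _; by rewrite adjE.
Qed.

Lemma trC p q (A : 'M[algC]_(p,q)) B : \tr (A *m B) = \tr (B *m A).
Proof. exact: mxtrace_mulC. Qed.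

End Adj.

Definition bf n (H : 'M[algC]_n) (u w : 'cV[algC]_n) := (mxadj u *m H *m w) 0 0.

Lemma bf_expand n (H : 'M[algC]_n) u w c :
  bf H (u + c *: w) (u + c *: w) =
  bf H u u + c * bf H u w + c^* * bf H w u + c^* * c * bf H w w.
Proof.
rewrite /bf adjD adjZ !mulmxDl !mulmxDr -!scalemxAl -!scalemxAr !mxE.
ring.
Qed.

Definition ev n (i : 'I_n) : 'cV[algC]_n := delta_mx i 0.

Lemma bf_ev n (H : 'M[algC]_n) i j : bf H (ev i) (ev j) = H i j.
Proof.
rewrite /bf /ev.
have -> : mxadj (delta_mx i 0 : 'cV[algC]_n) = delta_mx 0 i.
  by apply/matrixP=> a b; rewrite adjE !mxE conjC_nat andbC.
by rewrite -rowE -colE !mxE.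
Qed.

Lemma bfB n (A B : 'M[algC]_n) u w : bf (A - B) u w = bf A u w - bf B u w.
Proof. by rewrite /bf mulmxBr mulmxBl !mxE. Qed.

Lemma conj_bf n (H : 'M[algC]_n) u w : (bf H u w)^* = bf (mxadj H) w u.
Proof. by rewrite /bf -adjE !adjM adjK mulmxA. Qed.

Lemma bf_zero n (H : 'M[algC]_n) : (forall v, bf H v v = 0) -> H = 0.
Proof.
move=> h; apply/matrixP=> i j; rewrite mxE.
have h1 := bf_expand H (ev i) (ev j) 1.
have h2 := bf_expand H (ev i) (ev j) 'i.
rewrite !h !bf_ev conjC1 conjCi in h1 h2.
have e1 : H i j + H j i = 0.
  by move: h1; rewrite !mulr0 !mul1r add0r addr0 => /esym.
have e2 : 'i * (H i j - H j i) = 0.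
  by move: h2; rewrite !mulr0 add0r addr0 mulrBr !mulNr => /esym.
move/eqP: e2; rewrite mulf_eq0 (negPf (neq0Ci _)) /= subr_eq0 => /eqP e2.
move: e1; rewrite e2 -mulr2n => /eqP; by rewrite mulrn_eq0 /= => /eqP.
Qed.

Lemma psd_herm n (A : 'M[algC]_n) : psd A -> mxadj A = A.
Proof.
move=> hA; apply/eqP; rewrite -subr_eq0; apply/eqP/bf_zero => v.
rewrite bfB -conj_bf.
have /ger0_real/CrealP -> : 0 <= bf A v v by exact: hA.
by rewrite subrr.
Qed.

Lemma adj_tC p q (A : 'M[algC]_(p,q)) : mxadj A = map_mx conjC (A^T).
Proof. by rewrite /mxadj map_trmx. Qed.

Lemma psd_spectral n (A : 'M[algC]_n) : psd A ->
  exists U : 'M[algC]_n, exists d : 'rV[algC]_n,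
   [/\ U *m mxadj U = 1%:M, mxadj U *m U = 1%:M, (forall i, 0 <= d 0 i)
     & A = mxadj U *m diag_mx d *m U].
Proof.
move=> hA; have hH := psd_herm hA.
have nA : A \is normalmx.
  by apply/normalmxP; rewrite -adj_tC hH.
move/orthomx_spectralP: nA; set U := spectralmx A; set d := spectral_diag A => eA.
have uU : U *m mxadj U = 1%:M.
  by rewrite adj_tC; apply/unitarymxP/spectral_unitarymx.
have uU' : mxadj U *m U = 1%:M by apply: mulmx1C.
have iU : invmx U = mxadj U.
  by rewrite adj_tC invmx_unitary ?spectral_unitarymx.
rewrite iU in eA.
exists U, d; split => // i.
have -> : d 0 i = (U *m A *m mxadj U) i i.
  rewrite eA !mulmxA uU mul1mx -mulmxA uU mulmx1 mxE eqxx mulr1n //.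
rewrite -bf_ev /bf; have := hA (mxadj U *m ev i).
by rewrite adjM adjK !mulmxA.
Qed.

Lemma diag_mul n (a b : 'rV[algC]_n) :
  diag_mx a *m diag_mx b = diag_mx (\row_i (a 0 i * b 0 i)).
Proof.
apply/matrixP=> i j; rewrite mul_diag_mx !mxE.
by case: (i == j); rewrite ?mulr1n ?mulr0n ?mulr0.
Qed.

Lemma adj_diag n (a : 'rV[algC]_n) : mxadj (diag_mx a) = diag_mx (map_mx conjC a).
Proof. by rewrite adj_tC tr_diag_mx map_diag_mx. Qed.

Lemma psd_factor n (A : 'M[algC]_n) : psd A -> exists B : 'M_n, A = B *m mxadj B.
Proof.
move=> /psd_spectral [U [d [uU uU' d0 eA]]].
exists (mxadj U *m diag_mx (\row_i sqrtC (d 0 i))).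
rewrite adjM adjK -!mulmxA [diag_mx _ *m (_ *m _)]mulmxA adj_diag diag_mul.
rewrite eA -!mulmxA; congr (_ *m (diag_mx _ *m _)).
apply/rowP=> i; rewrite !mxE.
have r := sqrtC_real (d0 i); rewrite (conj_Creal r) -expr2 sqrtCK //.
Qed.

Lemma mulVmulx (x : algC) : x * x^-1 * x = x.
Proof. by have [->|nz] := eqVneq x 0; rewrite ?mulr0 // divfK. Qed.

Lemma mulxmulV (x : algC) : x^-1 * x * x^-1 = x^-1.
Proof. by have [->|nz] := eqVneq x 0; rewrite ?invr0 ?mul0r // mulVf ?mul1r. Qed.

Lemma psd_mp n (A : 'M[algC]_n) : psd A -> exists Y, is_MP A Y /\ mxadj Y = Y.
Proof.
move=> /psd_spectral [U [d [uU uU' d0 eA]]].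
set D := diag_mx d; set E := diag_mx (\row_i (d 0 i)^-1).
have dr i : (d 0 i)^* = d 0 i by apply/conj_Creal/ger0_real.
have Dh : mxadj D = D.
  by rewrite adj_diag; congr diag_mx; apply/rowP=> i; rewrite !mxE dr.
have Eh : mxadj E = E.
  rewrite adj_diag; congr diag_mx; apply/rowP=> i; by rewrite !mxE conj_Creal // realV ger0_real.
have DED : D *m E *m D = D.
  by rewrite !diag_mul; congr diag_mx; apply/rowP=> i; rewrite !mxE mulVmulx.
have EDE : E *m D *m E = E.
  by rewrite !diag_mul; congr diag_mx; apply/rowP=> i; rewrite !mxE mulxmulV.
have DEh : mxadj (D *m E) = D *m E.
  rewrite diag_mul adj_diag; congr diag_mx; apply/rowP=> i.
  by rewrite !mxE conj_Creal // realM ?realV ?ger0_real.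
have EDh : mxadj (E *m D) = E *m D.
  rewrite diag_mul adj_diag; congr diag_mx; apply/rowP=> i.
  by rewrite !mxE conj_Creal // realM ?realV ?ger0_real.
have sw (X Y : 'M[algC]_n) : mxadj U *m X *m U *m (mxadj U *m Y *m U) = mxadj U *m (X *m Y) *m U.
  by rewrite !mulmxA -[_ *m U *m mxadj U]mulmxA uU mulmx1.
exists (mxadj U *m E *m U); split; last by rewrite !adjM adjK Eh mulmxA.
rewrite eA; split.
- by rewrite sw sw DED.
- by rewrite sw sw EDE.
- by rewrite sw adjM adjM adjK DEh mulmxA.
- by rewrite sw adjM adjM adjK EDh mulmxA.
Qed.

Lemma mp_unique n (A Y1 Y2 : 'M[algC]_n) : is_MP A Y1 -> is_MP A Y2 -> Y1 = Y2.
Proof.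
case=> a1 b1 c1 d1 [a2 b2 c2 d2].
have h1 : mxadj A = mxadj A *m (A *m Y2).
  by rewrite -{1}a2 adjM c2.
have h2 : mxadj A = (Y1 *m A) *m mxadj A.
  by rewrite -{1}a1 -mulmxA adjM d1.
have e1 : Y1 = Y1 *m A *m Y2.
  transitivity (Y1 *m mxadj (A *m Y1)); first by rewrite c1 mulmxA b1.
  rewrite adjM h1 [mxadj Y1 *m _]mulmxA -adjM c1.
  by rewrite !mulmxA b1.
have e2 : Y2 = Y1 *m A *m Y2.
  transitivity (mxadj (Y2 *m A) *m Y2); first by rewrite d2 b2.
  rewrite adjM h2 -!mulmxA [mxadj A *m _]mulmxA -adjM d2.
  by rewrite b2.
by rewrite e1 -e2.
Qed.

Lemma mp_adj n (A Y : 'M[algC]_n) : mxadj A = A -> is_MP A Y -> is_MP A (mxadj Y).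
Proof.
move=> hA [a b c d]; split.
- by rewrite -{1 2}hA -!adjM mulmxA a hA.
- by rewrite -{1}hA -!adjM mulmxA b.
- by rewrite adjM adjK hA -{1}d adjM hA.
- by rewrite adjM adjK hA -{1}c adjM hA.
Qed.

Lemma mpinv_MP n (A : 'M[algC]_n) : psd A -> is_MP A (mpinv A).
Proof.
move=> /psd_mp [Y [hY _]]; rewrite /mpinv.
by apply: (epsilon_spec (inhabits 0) (fun Y => is_MP A Y)); exists Y.
Qed.

Lemma mpinv_herm n (A : 'M[algC]_n) : psd A -> mxadj (mpinv A) = mpinv A.
Proof.
move=> hA; have h := mpinv_MP hA.
by apply: mp_unique (mp_adj (psd_herm hA) h) h.
Qed.

Lemma bf_congr n (X M : 'M[algC]_n) u w :
  bf (mxadj M *m X *m M) u w = bf X (M *m u) (M *m w).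
Proof. by rewrite /bf adjM !mulmxA. Qed.

Lemma psd_congr n (X M : 'M[algC]_n) : psd X -> psd (mxadj M *m X *m M).
Proof. by move=> hX v; have := hX (M *m v); rewrite -/(bf _ _ _) -bf_congr. Qed.

Lemma psd1 n : psd (1%:M : 'M[algC]_n).
Proof.
move=> v; rewrite mulmx1 mxE; apply: sumr_ge0 => i _.
by rewrite adjE mulrC mul_conjC_ge0.
Qed.

Lemma psd_BB n (B : 'M[algC]_n) : psd (B *m mxadj B).
Proof. by have := psd_congr (mxadj B) (@psd1 n); rewrite adjK mulmx1. Qed.

Lemma psdD n (A B : 'M[algC]_n) : psd A -> psd B -> psd (A + B).
Proof. by move=> hA hB v; rewrite mulmxDr mulmxDl mxE addr_ge0. Qed.

Lemma psdZ n (A : 'M[algC]_n) c : 0 <= c -> psd A -> psd (c *: A).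
Proof. by move=> c0 hA v; rewrite -scalemxAr -scalemxAl mxE mulr_ge0. Qed.

Lemma diag_bf n (A : 'M[algC]_n) j : A j j = bf A (ev j) (ev j).
Proof. by rewrite bf_ev. Qed.

Lemma tr_quad n (X M : 'M[algC]_n) : psd X -> 0 <= \tr (mxadj M *m X *m M).
Proof.
move=> hX; apply: sumr_ge0 => j _; rewrite diag_bf bf_congr; exact: hX.
Qed.

Lemma tr_prod n (X P : 'M[algC]_n) : psd X -> psd P -> 0 <= \tr (X *m P).
Proof.
move=> /psd_factor [B ->] hP.
rewrite -mulmxA trC -mulmxA mulmxA.
by have := tr_quad B hP.
Qed.

Lemma adj_ev n (i : 'I_n) : mxadj (ev i) = delta_mx 0 i.
Proof. by apply/matrixP=> a b; rewrite adjE !mxE conjC_nat andbC. Qed.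

Lemma psd_BBr n p (B : 'M[algC]_(n,p)) : psd (B *m mxadj B).
Proof.
move=> v.
have -> : mxadj v *m (B *m mxadj B) *m v = mxadj (mxadj B *m v) *m (mxadj B *m v).
  by rewrite adjM adjK !mulmxA.
rewrite mxE.
by apply: sumr_ge0 => k _; rewrite adjE mulrC mul_conjC_ge0.
Qed.

Lemma outer_expand n p (u w : 'M[algC]_(n,p)) c :
  (u + c *: w) *m mxadj (u + c *: w) =
  u *m mxadj u + c^* *: (u *m mxadj w) + c *: (w *m mxadj u)
  + (c * c^*) *: (w *m mxadj w).
Proof.
rewrite adjD adjZ !mulmxDl !mulmxDr -!scalemxAl -!scalemxAr.
by apply/matrixP=> i j; rewrite !mxE; ring.
Qed.

Definition starp n m (phi : 'M[algC]_n -> 'M[algC]_m) (M : 'M[algC]_n) :=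
  phi (mxadj M) = mxadj (phi M).

Lemma star_pres n m (phi : {linear 'M[algC]_n -> 'M[algC]_m}) :
  positive_map phi -> forall M, phi (mxadj M) = mxadj (phi M).
Proof.
move=> pos.
have sP : forall P, psd P -> starp phi P.
  by move=> P hP; rewrite /starp (psd_herm hP) (psd_herm (pos _ hP)).
have sD : forall A B, starp phi A -> starp phi B -> starp phi (A + B).
  by move=> A B hA hB; rewrite /starp adjD !linearD /= hA hB adjD.
have sZ : forall c A, starp phi A -> starp phi (c *: A).
  by move=> c A hA; rewrite /starp adjZ !linearZ /= hA adjZ.
have sN : forall A B, starp phi A -> starp phi B -> starp phi (A - B).
  by move=> A B hA hB; rewrite -scaleN1r; apply sD => //; apply sZ.
have sO : forall u w : 'cV[algC]_n, starp phi (u *m mxadj w).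
  move=> u w.
  have T c : starp phi (c^* *: (u *m mxadj w) + c *: (w *m mxadj u)).
    have e := outer_expand u w c.
    have -> : c^* *: (u *m mxadj w) + c *: (w *m mxadj u) =
       (u + c *: w) *m mxadj (u + c *: w) - u *m mxadj u - (c * c^*) *: (w *m mxadj w).
      by rewrite e; apply/matrixP=> i j; rewrite !mxE; ring.
    by apply sN; [apply sN|apply sZ]; apply sP; apply: psd_BBr.
  have -> : u *m mxadj w = 2^-1 *: ((1^* *: (u *m mxadj w) + 1 *: (w *m mxadj u))
        + 'i *: ('i^* *: (u *m mxadj w) + 'i *: (w *m mxadj u))).
    rewrite conjC1 conjCi !scale1r !scalerDr !scalerA.
    have -> : 'i * - 'i = 1 :> algC by rewrite mulrN -expr2 sqrCi opprK.
    have -> : 'i * 'i = -1 :> algC by rewrite -expr2 sqrCi.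
    apply/matrixP=> i j; rewrite !mxE.
    have h2 : (2 : algC) != 0 by rewrite pnatr_eq0.
    by field.
  by apply sZ; apply sD => //; apply sZ.
move=> M; rewrite -/(starp phi M) [M]matrix_sum_delta.
elim/big_ind: _ => [|A B|i _]; first by rewrite /starp adj0 linear0 adj0.
  exact: sD.
elim/big_ind: _ => [|A B|j _]; first by rewrite /starp adj0 linear0 adj0.
  exact: sD.
apply sZ; have -> : delta_mx i j = ev i *m mxadj (ev j) :> 'M[algC]_n.
  by rewrite adj_ev /ev mul_delta_mx.
exact: sO.
Qed.

Lemma tr11 (M : 'M[algC]_1) : \tr M = M 0 0.
Proof. by rewrite /mxtrace big_ord1. Qed.

Lemma tr_delta n (C : 'M[algC]_n) i j : \tr (C *m delta_mx j i) = C i j.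
Proof.
have -> : delta_mx j i = (delta_mx j 0 : 'cV[algC]_n) *m (delta_mx 0 i : 'rV[algC]_n).
  by rewrite mul_delta_mx.
rewrite mulmxA trC tr11.
transitivity (bf C (ev i) (ev j)); last exact: bf_ev.
by rewrite /bf /ev adj_ev mulmxA.
Qed.

Lemma tr_zero n (C : 'M[algC]_n) : (forall B, \tr (C *m B) = 0) -> C = 0.
Proof. by move=> h; apply/matrixP=> i j; rewrite -tr_delta h mxE. Qed.

Lemma psi_herm n m (phi : {linear 'M[algC]_n -> 'M[algC]_m}) psi (X : 'M[algC]_m) :
  positive_map phi -> hs_adjoint phi psi -> mxadj X = X -> mxadj (psi X) = psi X.
Proof.
move=> pos hs hX; apply/eqP; rewrite -subr_eq0; apply/eqP/tr_zero => B.
rewrite mulmxBl linearB /=; apply/eqP; rewrite subr_eq0; apply/eqP; symmetry.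
have e1 : \tr (psi X *m B) = (\tr (mxadj (psi X) *m mxadj B))^*.
  by rewrite -tr_adj adjM !adjK trC.
rewrite e1 -(hs X (mxadj B)) (star_pres pos) -tr_adj adjM !adjK trC -{1}hX hs //.
Qed.

Lemma bf_tr n (A : 'M[algC]_n) v : bf A v v = \tr (A *m (v *m mxadj v)).
Proof. by rewrite /bf -tr11 trC [in LHS]trC mulmxA. Qed.

Lemma psi_pos n m (phi : {linear 'M[algC]_n -> 'M[algC]_m}) psi (X : 'M[algC]_m) :
  positive_map phi -> hs_adjoint phi psi -> psd X -> psd (psi X).
Proof.
move=> pos hs hX v; rewrite -/(bf _ _ _) bf_tr.
rewrite -(psi_herm pos hs (psd_herm hX)) -hs (psd_herm hX).
by apply: tr_prod => //; apply: pos; apply: psd_BBr.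
Qed.

Lemma lin_real (a h : algC) : (forall t, t \is Num.real -> 0 <= a + t * h) -> h = 0.
Proof.
move=> H.
have h0 := H 0 (@real0 _); rewrite mul0r addr0 in h0.
have h1 := H 1 (@real1 _); rewrite mul1r in h1.
have hr : h \is Num.real.
  by have := realB (ger0_real h1) (ger0_real h0); rewrite addrAC subrr add0r.
apply/eqP; apply: contraT => hnz.
have tr : - (a + 1) / h \is Num.real.
  apply: rpredM; last by rewrite rpredV.
  by rewrite rpredN rpredD // ?rpred1 ?ger0_real.
have := H _ tr; rewrite divfK // opprD addrA subrr add0r.
by rewrite ler0N1.
Qed.

Lemma bfD n (A B : 'M[algC]_n) u w : bf (A + B) u w = bf A u w + bf B u w.
Proof. by rewrite /bf mulmxDr mulmxDl !mxE. Qed.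

Lemma bfZ n (A : 'M[algC]_n) c u w : bf (c *: A) u w = c * bf A u w.
Proof. by rewrite /bf -scalemxAr -scalemxAl !mxE. Qed.

Lemma kadison n m (phi : {linear 'M[algC]_n -> 'M[algC]_m}) (Q : 'M[algC]_n) :
  positive_map phi -> phi (Q *m mxadj Q) = 0 -> forall R, phi (R *m mxadj Q) = 0.
Proof.
move=> pos hQ.
have key R : phi (R *m mxadj Q + Q *m mxadj R) = 0.
  apply: bf_zero => v; apply: (@lin_real (bf (phi (R *m mxadj R)) v v)) => t tr.
  have := pos _ (psd_BBr (R + t *: Q)) v; rewrite -/(bf _ _ _).
  rewrite outer_expand (conj_Creal tr) !linearD !linearZ /= hQ scaler0 addr0.
  by rewrite !bfD !bfZ mulrDr addrA.
move=> R; have k1 := key R; have k2 := key ('i *: R).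
rewrite adjZ conjCi -scalemxAl -scalemxAr linearD !linearZ /= in k2.
rewrite linearD /= in k1; move/eqP: k1; rewrite addr_eq0 => /eqP k1.
rewrite k1 scalerN -scaleNr -scalerDl in k2; rewrite k1.
move/eqP: k2; rewrite scaler_eq0 => /orP [|/eqP ->]; last by rewrite oppr0.
by rewrite -mulr2n mulrn_eq0 /= oppr_eq0 (negPf (neq0Ci _)).
Qed.

Lemma mpA n (Y : 'M[algC]_n) : psd Y -> Y *m mpinv Y *m Y = Y.
Proof. by case/mpinv_MP. Qed.
Lemma mpB n (Y : 'M[algC]_n) : psd Y -> mpinv Y *m Y *m mpinv Y = mpinv Y.
Proof. by case/mpinv_MP. Qed.
Lemma mpC n (Y : 'M[algC]_n) : psd Y -> Y *m mpinv Y = mpinv Y *m Y.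
Proof.
move=> hY; case: (mpinv_MP hY) => _ _ c _.
by rewrite -c adjM (mpinv_herm hY) (psd_herm hY).
Qed.
Lemma mpPh n (Y : 'M[algC]_n) : psd Y -> mxadj (Y *m mpinv Y) = Y *m mpinv Y.
Proof. by case/mpinv_MP. Qed.

Lemma ker_mx n (X Yk M : 'M[algC]_n) : ker_sub X Yk -> X *m M = 0 -> Yk *m M = 0.
Proof.
move=> hk h; apply/matrixP=> i j.
have := hk (M *m delta_mx j 0); rewrite mulmxA h mul0mx => /(_ erefl) e.
have := congr1 (fun A : 'cV[algC]_n => A i 0) e; rewrite mulmxA -colE !mxE => ->.
done.
Qed.

Lemma quad_expand n (X W G : 'M[algC]_n) : psd X ->
  \tr (mxadj W *m X *m G) + (\tr (mxadj W *m X *m G))^*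
   <= \tr (mxadj W *m X *m W) + \tr (mxadj G *m X *m G).
Proof.
move=> hX; have h := tr_quad (W - G) hX.
have -> : (\tr (mxadj W *m X *m G))^* = \tr (mxadj G *m X *m W).
  by rewrite -tr_adj !adjM adjK (psd_herm hX) mulmxA.
rewrite adjB !mulmxBl !mulmxBr !linearB /= in h.
rewrite -subr_ge0; move: h.
set a := \tr (mxadj W *m X *m W); set b := \tr (mxadj W *m X *m G).
set c := \tr (mxadj G *m X *m W); set d := \tr (mxadj G *m X *m G).
suff -> : a + d - (b + c) = a - b - (c - d) by [].
ring.
Qed.

Lemma variational n (Y A Z : 'M[algC]_n) : psd Y ->
  \tr (mxadj A *m (Y *m mpinv Y) *m Z) + (\tr (mxadj A *m (Y *m mpinv Y) *m Z))^*
  <= \tr (mxadj A *m mpinv Y *m A) + \tr (mxadj Z *m Y *m Z).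
Proof.
move=> hY; have := quad_expand (mpinv Y *m A) Z hY.
rewrite adjM (mpinv_herm hY) (mpC hY).
have -> : mxadj A *m mpinv Y *m Y *m (mpinv Y *m A) = mxadj A *m mpinv Y *m A.
  by rewrite -!mulmxA [Y *m (_ *m A)]mulmxA [mpinv Y *m (_ *m A)]mulmxA [mpinv Y *m (Y *m _)]mulmxA mpB.
by rewrite !mulmxA.
Qed.

Lemma psd_tr0 n (P : 'M[algC]_n) : psd P -> \tr P = 0 -> P = 0.
Proof.
move=> /psd_factor [B ->] h.
have B0 : B = 0.
  apply/matrixP=> i k; rewrite mxE.
  move: h; rewrite /mxtrace => /eqP; rewrite psumr_eq0 => [/allP/(_ i)|]; last first.
    move=> j _; rewrite mxE; apply: sumr_ge0 => l _; rewrite adjE mul_conjC_ge0 //.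
  rewrite mem_index_enum => /(_ isT) /implyP /(_ isT).
  rewrite mxE psumr_eq0 => [/allP/(_ k)|]; last first.
    by move=> l _; rewrite adjE mul_conjC_ge0.
  by rewrite mem_index_enum => /(_ isT) /implyP /(_ isT); rewrite adjE mul_conjC_eq0 => /eqP.
by rewrite B0 mul0mx.
Qed.

Lemma lin_pos (a h : algC) : (forall t, 0 <= t -> 0 <= a + t * h) -> 0 <= h.
Proof.
move=> H.
have h0 := H 0 (lexx 0); rewrite mul0r addr0 in h0.
have h1 := H 1 ler01; rewrite mul1r in h1.
have hr : h \is Num.real.
  by have := realB (ger0_real h1) (ger0_real h0); rewrite addrAC subrr add0r.
rewrite real_leNgt ?real0 //; apply/negP => hneg.
have tp : 0 <= (a + 1) / - h.
  by apply: divr_ge0; [exact: addr_ge0 h0 ler01 | rewrite oppr_ge0 ltW].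
have hnz : h != 0 by rewrite lt_eqF.
have e : (a + 1) / - h * h = - (a + 1) by rewrite invrN mulrN mulNr divfK.
by have := H _ tp; rewrite e opprD addrA subrr add0r ler0N1.
Qed.

Lemma eZlem n (Y A : 'M[algC]_n) : psd Y ->
  mxadj (mpinv Y *m A) *m Y *m (mpinv Y *m A) = mxadj A *m mpinv Y *m A.
Proof.
move=> hY; rewrite adjM (mpinv_herm hY).
by rewrite -!mulmxA [Y *m (_ *m A)]mulmxA [mpinv Y *m (_ *m A)]mulmxA [mpinv Y *m (Y *m _)]mulmxA mpB.
Qed.

Lemma dir_back n m (phi : {linear 'M[algC]_n -> 'M[algC]_m}) psi :
  positive_map phi -> hs_adjoint phi psi ->
  (forall K : 'M[algC]_n, loewner_ge (phi (mxadj K *m K)) (mxadj (phi K) *m phi K)) ->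
  forall K X : 'M[algC]_m, psd X -> ker_sub X (mxadj K) ->
     \tr (mxadj (psi K) *m mpinv (psi X) *m psi K) <= \tr (mxadj K *m mpinv X *m K).
Proof.
move=> pos hs S K X hX hk.
have hY := psi_pos pos hs hX.
set Y := psi X in hY *; set A := psi K.
set Z := mpinv Y *m A.
set t := \tr (mxadj A *m mpinv Y *m A).
have e1 : \tr (mxadj K *m phi Z) = t by rewrite hs /Z mulmxA.
have e2 : \tr (X *m phi (Z *m mxadj Z)) = t.
  rewrite -{1}(psd_herm hX) hs -/Y (psd_herm hY) mulmxA trC mulmxA.
  by rewrite /Z (eZlem _ hY).
have t0 : 0 <= t by rewrite -e2; apply: tr_prod => //; apply: pos; apply: psd_BBr.
set G := phi Z.
have hG : \tr (mxadj G *m X *m G) <= t.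
  have hS := S (mxadj Z); rewrite adjK (star_pres pos) adjK in hS.
  have := tr_prod hX hS; rewrite mulmxBr linearB /= subr_ge0 e2.
  have eg : \tr (X *m (phi Z *m mxadj (phi Z))) = \tr (mxadj G *m X *m G).
    by rewrite [in LHS]mulmxA [in LHS]trC [in LHS]mulmxA.
  by rewrite eg.
have h0 : X *m (1%:M - mpinv X *m X) = 0 by rewrite mulmxBr mulmx1 mulmxA mpA ?subrr.
have h1 := ker_mx hk h0.
have [W eK] : exists W, K = X *m W.
  exists (mpinv X *m K).
  move/eqP: h1; rewrite mulmxBr mulmx1 subr_eq0 => /eqP h1.
  by rewrite -[K in LHS]adjK h1 !adjM adjK (psd_herm hX) (mpinv_herm hX) mulmxA.
have eq : \tr (mxadj K *m mpinv X *m K) = \tr (mxadj W *m X *m W).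
  by rewrite eK adjM (psd_herm hX) -!mulmxA [X *m (mpinv X *m _)]mulmxA [X *m mpinv X *m (X *m W)]mulmxA mpA.
have ec : \tr (mxadj W *m X *m G) = t by rewrite -e1 eK adjM (psd_herm hX).
have := quad_expand W G hX; rewrite ec (conj_Creal (ger0_real t0)) -eq.
move=> h.
have h2 : \tr (mxadj K *m mpinv X *m K) + \tr (mxadj G *m X *m G)
          <= \tr (mxadj K *m mpinv X *m K) + t by rewrite lerD2l.
by have := le_trans h h2; rewrite lerD2r.
Qed.

Lemma trXFF n (X F : 'M[algC]_n) : \tr (X *m (F *m mxadj F)) = \tr (mxadj F *m X *m F).
Proof. by rewrite [in LHS]mulmxA [in LHS]trC [in LHS]mulmxA. Qed.

Lemma dir_fwd_core n m (phi : {linear 'M[algC]_n -> 'M[algC]_m}) psi :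
  positive_map phi -> hs_adjoint phi psi ->
  (forall K X : 'M[algC]_m, psd X -> ker_sub X (mxadj K) ->
     \tr (mxadj (psi K) *m mpinv (psi X) *m psi K) <= \tr (mxadj K *m mpinv X *m K)) ->
  forall (Z : 'M[algC]_n) (X : 'M[algC]_m), psd X -> psd (X - 1%:M) ->
  0 <= \tr (X *m (phi (Z *m mxadj Z) - phi Z *m mxadj (phi Z))).
Proof.
move=> pos hs Hin Z X hX hX1.
set F := phi Z.
have hY := psi_pos pos hs hX.
set Y := psi X in hY *; set Yp := mpinv Y.
set Q := 1%:M - Y *m Yp.
have Qh : mxadj Q = Q by rewrite /Q adjB adj1 (mpPh hY).
have PP : (Y *m Yp) *m (Y *m Yp) = Y *m Yp by rewrite mulmxA mpA.
have QQ : Q *m mxadj Q = Q.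
  by rewrite Qh /Q mulmxBl mul1mx mulmxBr mulmx1 PP subrr subr0.
have YQ : Y *m Q = 0.
  by rewrite /Q mulmxBr mulmx1 (mpC hY) mulmxA mpA ?subrr.
have phiQ0 : phi Q = 0.
  have pQ : psd (phi Q) by rewrite -QQ; apply: pos; apply: psd_BBr.
  apply: psd_tr0 => //.
  have a : \tr (X *m phi Q) = 0.
    by rewrite -{1}(psd_herm hX) hs -/Y (psd_herm hY) YQ linear0.
  have b := tr_prod hX1 pQ.
  rewrite mulmxBl mul1mx linearB /= a sub0r oppr_ge0 in b.
  have c := tr_prod (@psd1 m) pQ; rewrite mul1mx in c.
  by apply/eqP; rewrite eq_le b c.
have kad := kadison pos (etrans (congr1 phi QQ) phiQ0).
have phiQZ : phi (Q *m Z) = 0.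
  by rewrite -[Q *m Z]adjK adjM (star_pres pos) kad adj0.
set K' := X *m F.
have hk : ker_sub X (mxadj K').
  by move=> v hv; rewrite /K' adjM (psd_herm hX) -mulmxA hv mulmx0.
have H1 := Hin K' X hX hk.
have eR : \tr (mxadj K' *m mpinv X *m K') = \tr (mxadj F *m X *m F).
  rewrite /K' adjM (psd_herm hX) -!mulmxA [X *m (mpinv X *m _)]mulmxA.
  by rewrite [X *m mpinv X *m (X *m F)]mulmxA mpA.
have V := variational (psi K') Z hY.
have ePZ : phi (Y *m Yp *m Z) = F.
  have -> : Y *m Yp *m Z = Z - Q *m Z by rewrite /Q mulmxBl mul1mx opprB addrC subrK.
  by rewrite linearB /= phiQZ subr0.
have es : \tr (mxadj (psi K') *m (Y *m Yp) *m Z) = \tr (mxadj F *m X *m F).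
  by rewrite -mulmxA -hs ePZ /K' adjM (psd_herm hX).
have er : \tr (mxadj Z *m Y *m Z) = \tr (X *m phi (Z *m mxadj Z)).
  by rewrite -{1}(psd_herm hX) hs -/Y (psd_herm hY) [in RHS]mulmxA [in RHS]trC mulmxA.
have f0 := tr_quad F hX.
rewrite es (conj_Creal (ger0_real f0)) er in V.
rewrite -/Yp eR in H1.
rewrite mulmxBr linearB /= subr_ge0 -/F trXFF.
have h2 : \tr (mxadj (psi K') *m Yp *m psi K') + \tr (X *m phi (Z *m mxadj Z))
   <= \tr (mxadj F *m X *m F) + \tr (X *m phi (Z *m mxadj Z)) by rewrite lerD2r.
by have := le_trans V h2; rewrite lerD2l.
Qed.

End Helpers.
Import Helpers.

Theorem theorem1p4 (n m : nat) (phi : {linear 'M[algC]_n -> 'M[algC]_m})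
  (psi : 'M[algC]_m -> 'M[algC]_n) :
  positive_map phi -> hs_adjoint phi psi ->
  (forall K X : 'M[algC]_m, psd X -> ker_sub X (mxadj K) ->
     \tr (mxadj (psi K) *m mpinv (psi X) *m psi K) <= \tr (mxadj K *m mpinv X *m K))
  <->
  (forall K : 'M[algC]_n, loewner_ge (phi (mxadj K *m K)) (mxadj (phi K) *m phi K)).
Proof.
move=> pos hs; split; last exact: dir_back.
move=> Hin K u.
set Z := mxadj K.
have eK : phi K = mxadj (phi Z) by rewrite /Z (star_pres pos) adjK.
have eKK : mxadj K *m K = Z *m mxadj Z by rewrite /Z adjK.
rewrite eKK eK adjK.
set D := phi (Z *m mxadj Z) - phi Z *m mxadj (phi Z).
rewrite -/(bf D u u).
apply: (@lin_pos (\tr D)) => s s0.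
have hX : psd (1%:M + s *: (u *m mxadj u)).
  by apply: psdD; [apply: psd1 | apply: psdZ => //; apply: psd_BBr].
have hX1 : psd (1%:M + s *: (u *m mxadj u) - 1%:M).
  by rewrite addrAC subrr add0r; apply: psdZ => //; apply: psd_BBr.
have := dir_fwd_core pos hs Hin Z hX hX1; rewrite -/D.
rewrite mulmxDl mul1mx linearD /= -scalemxAl linearZ /= bf_tr.
by rewrite [in X in _ -> _ <= _ + _ * X]trC.
Qed.
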